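(* There exists a locally finite quasi-transitive graph $G$ with infinitely many ends, chromatic number $\chi(G)=3$ and maximum degree $4$, which has a periodic proper vertex-coloring with $4$ colors but no periodic proper vertex-coloring with $3$ colors.
   Context: Locally finite: all degrees finite; quasi-transitive: finitely many $\mathrm{Aut}(G)$-orbits on $V(G)$. Ends are equivalence classes of rays, two rays being equivalent if joined by infinitely many disjoint paths. A vertex-coloring is periodic if the subgroup of color-preserving automorphisms of $G$ has finitely many orbits on $V(G)$. *)

(* Defs.v *)
From Stdlib Require Import List Arith.
Import ListNotations.

Section Graphs.
Variable V : Type.
Variable adj : V -> V -> Prop.

Definition simple_graph : Prop :=
  (forall x y, adj x y -> adj y x) /\ (forall x, ~ adj x x).

Fixpoint walk_from (x : V) (l : list V) : Prop :=
  match l with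
  | [] => True
  | y :: l' => adj x y /\ walk_from y l'
  end.

(* a path with vertex list x :: l (x first, last x l last) *)
Definition is_path (x : V) (l : list V) : Prop :=
  walk_from x l /\ NoDup (x :: l).

Definition connected : Prop :=
  forall u v, exists l, is_path u l /\ last l u = v.

Definition degree (v : V) (d : nat) : Prop :=
  exists l : list V, NoDup l /\ (forall w, adj v w <-> In w l) /\ length l = d.

Definition locally_finite : Prop := forall v, exists d, degree v d.

Definition max_degree (D : nat) : Prop :=
  (forall v, exists d, degree v d /\ d <= D) /\ (exists v, degree v D).

Definition is_aut (f : V -> V) : Prop :=
  (exists g : V -> V, (forall x, g (f x) = x) /\ (forall x, f (g x) = x)) /\
  (forall x y, adj x y <-> adj (f x) (f y)).

(* a subgroup of Aut(G), given by a predicate H on automorphisms, has finitely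
   many orbits on V: finitely many representatives reach every vertex *)
Definition finitely_many_orbits (H : (V -> V) -> Prop) : Prop :=
  exists reps : list V, forall v, exists s f, In s reps /\ H f /\ f s = v.

Definition quasi_transitive : Prop := finitely_many_orbits is_aut.

Definition proper_coloring (k : nat) (c : V -> nat) : Prop :=
  (forall v, c v < k) /\ (forall x y, adj x y -> c x <> c y).

Definition periodic_coloring (c : V -> nat) : Prop :=
  finitely_many_orbits (fun f => is_aut f /\ forall x, c (f x) = c x).

Definition chromatic_number (k : nat) : Prop :=
  (exists c, proper_coloring k c) /\
  (forall j, j < k -> ~ exists c, proper_coloring j c).

Definition is_ray (r : nat -> V) : Prop :=
  (forall n, adj (r n) (r (S n))) /\ (forall m n, r m = r n -> m = n).

(* two rays are equivalent if joined by infinitely many disjoint paths: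
   P i is the path with vertex list (fst (P i)) :: snd (P i), starting on r1
   and ending on r2, and distinct paths share no vertex *)
Definition path_verts (p : V * list V) : list V := fst p :: snd p.

Definition rays_equiv (r1 r2 : nat -> V) : Prop :=
  exists P : nat -> V * list V,
    (forall i, is_path (fst (P i)) (snd (P i))) /\
    (forall i, exists m, fst (P i) = r1 m) /\
    (forall i, exists n, last (snd (P i)) (fst (P i)) = r2 n) /\
    (forall i j v, i <> j -> In v (path_verts (P i)) -> ~ In v (path_verts (P j))).

Definition infinitely_many_ends : Prop :=
  forall n, exists R : nat -> nat -> V,
    (forall i, i < n -> is_ray (R i)) /\
    (forall i j, i < n -> j < n -> i <> j -> ~ rays_equiv (R i) (R j)).

End Graphs.

(* Main.v *)
Require Import Defs.
From Stdlib Require Import List Arith ZArith Lia Bool.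
From Stdlib Require Import FunctionalExtensionality ProofIrrelevance FinFun.
Import ListNotations.

Definition fin (d : Z -> bool) : Prop := exists m, forall k, (k < m)%Z -> d k = false.
Definition TVp (x : Z * (Z -> bool)) : Prop :=
  (forall k, (fst x <= k)%Z -> snd x k = false) /\ fin (snd x).
Definition TV := sig TVp.
Definition lvl (t:TV) : Z := fst (proj1_sig t).
Definition dg (t:TV) : Z -> bool := snd (proj1_sig t).

Lemma TV_ext t u : lvl t = lvl u -> (forall k, dg t k = dg u k) -> t = u.
Proof.
  destruct t as [[n d] Ht], u as [[n' d'] Hu]; unfold lvl, dg; simpl; intros -> E.
  assert (d = d') by (apply functional_extensionality; auto). subst.
  f_equal. apply proof_irrelevance.
Qed.

Lemma dg_hi t k : (lvl t <= k)%Z -> dg t k = false.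
Proof. destruct t as [[n d] [H1 H2]]; unfold lvl, dg; simpl; auto. Qed.
Lemma dg_lo t : fin (dg t).
Proof. destruct t as [[n d] [H1 H2]]; unfold lvl, dg; simpl; auto. Qed.

Definition mask (n:Z) (d:Z->bool) : Z -> bool := fun k => (k <? n)%Z && d k.
Lemma mkT_ok n d : fin d -> TVp (n, mask n d).
Proof.
  intros [m Hm]; split; simpl.
  - intros k Hk. unfold mask. destruct (Z.ltb_spec k n); [lia|reflexivity].
  - exists m. intros k Hk. unfold mask. rewrite Hm; auto. apply andb_false_r.
Qed.
Definition mkT n d (H : fin d) : TV := exist _ (n, mask n d) (mkT_ok n d H).
Lemma lvl_mk n d H : lvl (mkT n d H) = n. Proof. reflexivity. Qed.
Lemma dg_mk n d H k : dg (mkT n d H) k = ((k <? n)%Z && d k). Proof. reflexivity. Qed.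

Lemma fin_upd d a b : fin d -> fin (fun k => if (k =? a)%Z then b else d k).
Proof. intros [m Hm]. exists (Z.min m a). intros k Hk.
  destruct (Z.eqb_spec k a); [lia|]. apply Hm; lia. Qed.
Lemma fin_xor d e : fin d -> fin e -> fin (fun k => xorb (d k) (e k)).
Proof. intros [m Hm] [m' Hm']. exists (Z.min m m'). intros k Hk.
  rewrite Hm, Hm' by lia. reflexivity. Qed.
Lemma fin_shift d a : fin d -> fin (fun k => d (k - a)%Z).
Proof. intros [m Hm]. exists (m + a)%Z. intros k Hk. apply Hm; lia. Qed.
Lemma fin_shift' d a : fin d -> fin (fun k => d (k + a)%Z).
Proof. intros [m Hm]. exists (m - a)%Z. intros k Hk. apply Hm; lia. Qed.
Lemma fin0 : fin (fun _ => false). Proof. exists 0%Z; auto. Qed.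

Definition par t := mkT (lvl t - 1) (dg t) (dg_lo t).
Definition ch (b:bool) t := mkT (lvl t + 1) (fun k => if (k =? lvl t)%Z then b else dg t k)
   (fin_upd _ _ _ (dg_lo t)).
Definition sib t := mkT (lvl t) (fun k => if (k =? lvl t - 1)%Z then negb (dg t (lvl t - 1)) else dg t k)
   (fin_upd _ _ _ (dg_lo t)).
Definition lastd t := dg t (lvl t - 1).
Definition tau t s := mkT (lvl t + lvl s) (fun k => xorb (dg s (k - lvl t)) (dg t k))
   (fin_xor _ _ (fin_shift _ _ (dg_lo s)) (dg_lo t)).
Definition taui t s := mkT (lvl s - lvl t) (fun k => xorb (dg s (k + lvl t)) (dg t (k + lvl t)))
   (fin_xor _ _ (fin_shift' _ _ (dg_lo s)) (fin_shift' _ _ (dg_lo t))).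
Definition zeroT L := mkT L (fun _ => false) fin0.
Definition o := zeroT 0.

Ltac zsimpl := unfold o, par, ch, sib, tau, taui, zeroT, lastd in *;
  cbn [dg lvl mkT proj1_sig fst snd] in *; unfold mask in *.
Ltac zcase := repeat match goal with
  | |- context [(?a <? ?b)%Z] => destruct (Z.ltb_spec a b)
  | |- context [(?a =? ?b)%Z] => destruct (Z.eqb_spec a b)
  end; simpl.
Ltac zfin := try reflexivity; try lia;
  repeat match goal with |- context [dg ?t ?k] => rewrite (dg_hi t k) by lia end;
  try reflexivity; try lia.


Lemma par_ch b t : par (ch b t) = t.
Proof. apply TV_ext; zsimpl; [lia|]. intros k. zcase; subst; zfin. Qed.
Lemma lvl_ch b t : lvl (ch b t) = (lvl t + 1)%Z. Proof. reflexivity. Qed.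
Lemma lvl_par t : lvl (par t) = (lvl t - 1)%Z. Proof. reflexivity. Qed.
Lemma lastd_ch b t : lastd (ch b t) = b.
Proof. zsimpl. zcase; lia || auto. Qed.
Lemma ch_inj b b' t t' : ch b t = ch b' t' -> b = b' /\ t = t'.
Proof. intros E. split.
  - rewrite <- (lastd_ch b t), <- (lastd_ch b' t'), E; auto.
  - rewrite <- (par_ch b t), <- (par_ch b' t'), E; auto. Qed.
Lemma par_inv u t : par u = t -> u = ch (lastd u) t.
Proof. intros <-. apply TV_ext; zsimpl; [lia|]. intros k. zcase; subst; zfin.
  all: try (replace k with (lvl u - 1)%Z by lia; reflexivity). Qed.
Lemma sib_sib t : sib (sib t) = t.
Proof. apply TV_ext; zsimpl; [lia|]. intros k. zcase; subst; zfin.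
  all: try (destruct (dg t _); reflexivity). Qed.
Lemma lastd_sib t : lastd (sib t) = negb (lastd t).
Proof. zsimpl. zcase; lia || auto. Qed.
Lemma sib_neq t : sib t <> t.
Proof. intros E. assert (H := lastd_sib t). rewrite E in H. destruct (lastd t); discriminate. Qed.
Lemma par_sib t : par (sib t) = par t.
Proof. apply TV_ext; zsimpl; [lia|]. intros k. zcase; subst; zfin. Qed.
Lemma sib_ch b t : sib (ch b t) = ch (negb b) t.
Proof. apply TV_ext; zsimpl; [lia|]. intros k. zcase; subst; zfin. Qed.

Lemma tau_par t s : tau t (par s) = par (tau t s).
Proof. apply TV_ext; zsimpl; [lia|]. intros k. zcase; subst; zfin. Qed.
Lemma tau_sib t s : tau t (sib s) = sib (tau t s).
Proof. apply TV_ext; zsimpl; [lia|]. intros k. zcase; subst; zfin.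
  all: try (replace (lvl t + lvl s - 1 - lvl t)%Z with (lvl s - 1)%Z by lia;
            destruct (dg s _), (dg t _); reflexivity). Qed.
Lemma taui_tau t s : taui t (tau t s) = s.
Proof. apply TV_ext; zsimpl; [lia|]. intros k. zcase; subst; zfin.
  all: try (replace (k + lvl t - lvl t)%Z with k by lia; destruct (dg s k), (dg t _); reflexivity). Qed.
Lemma tau_taui t s : tau t (taui t s) = s.
Proof. apply TV_ext; zsimpl; [lia|]. intros k. zcase; subst; zfin.
  all: try (replace (k - lvl t + lvl t)%Z with k by lia; destruct (dg s k), (dg t _); reflexivity). Qed.
Lemma tau_o t : tau t o = t.
Proof. apply TV_ext; zsimpl; [lia|]. intros k. zcase; subst; zfin. Qed.


Inductive Kd := KT | KX | KY | KZ | KW | KM.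
Definition VV := (TV * Kd)%type.
Definition adjG (v w : VV) : Prop :=
 let (t,K) := v in let (u,L) := w in
 match K, L with
 | KX, KZ | KZ, KX | KX, KW | KW, KX | KZ, KW | KW, KZ | KY, KZ | KZ, KY
 | KY, KW | KW, KY | KW, KM | KM, KW | KM, KT | KT, KM => u = t
 | KX, KY | KY, KX => u = sib t
 | KT, KX => par u = t
 | KX, KT => u = par t
 | _, _ => False
 end.

Definition nbrs (v : VV) : list VV :=
  let (t,K) := v in
  match K with
  | KT => [(t,KM); (ch false t, KX); (ch true t, KX)]
  | KX => [(t,KZ); (t,KW); (sib t, KY); (par t, KT)]
  | KY => [(t,KZ); (t,KW); (sib t, KX)]
  | KZ => [(t,KX); (t,KW); (t,KY)]
  | KW => [(t,KX); (t,KZ); (t,KY); (t,KM)]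
  | KM => [(t,KW); (t,KT)]
  end.

Lemma ch_false_true t : ch false t <> ch true t.
Proof. intros E. apply ch_inj in E. destruct E; discriminate. Qed.

Lemma adj_nbrs v w : adjG v w <-> In w (nbrs v).
Proof.
  destruct v as [t K], w as [u L]; destruct K, L; simpl;
  split; intros H; subst;
  repeat match goal with
         | H : _ \/ _ |- _ => destruct H
         | H : (_,_) = (_,_) |- _ => injection H; clear H; intros; subst
         | H : False |- _ => destruct H
         end; auto; try discriminate; try (rewrite par_ch; reflexivity).
  pose proof (par_inv u _ eq_refl) as E. revert E; generalize (lastd u); intros [|] E;
  [do 2 right; left | right; left]; f_equal; symmetry; exact E.
Qed.

Lemma nbrs_nodup v : NoDup (nbrs v).
Proof.
  destruct v as [t K]; destruct K; simpl;
  repeat constructor; simpl; intros H;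
  repeat match goal with
         | H : _ \/ _ |- _ => destruct H
         | H : False |- _ => destruct H
         end; try discriminate.
  all: match goal with H : _ = _ |- _ => pose proof (f_equal fst H) as H'; simpl in H'; apply (ch_false_true t); congruence end.
Qed.

Definition dk (K : Kd) : nat :=
  match K with KT => 3 | KX => 4 | KY => 3 | KZ => 3 | KW => 4 | KM => 2 end.
Lemma len_nbrs v : length (nbrs v) = dk (snd v).
Proof. destruct v as [t K]; destruct K; reflexivity. Qed.

Lemma degree_nbrs v : degree VV adjG v (dk (snd v)).
Proof. exists (nbrs v). split; [apply nbrs_nodup|]. split; [apply adj_nbrs|apply len_nbrs]. Qed.

Lemma degree_uniq v d : degree VV adjG v d -> d = dk (snd v).
Proof.
  intros [l [Hn [Hi Hl]]]. rewrite <- len_nbrs, <- Hl.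
  apply Nat.le_antisymm; apply NoDup_incl_length; auto using nbrs_nodup;
  intros w Hw; [apply adj_nbrs, Hi| apply Hi, adj_nbrs]; auto.
Qed.

Lemma simple : simple_graph VV adjG.
Proof.
  split.
  - intros [t K] [u L]; destruct K, L; simpl; intros H; subst; auto;
    try rewrite sib_sib; auto.
  - intros [t K]; destruct K; simpl; auto.
Qed.


Definition isaut := is_aut VV adjG.

Lemma aut_inv f : isaut f -> exists g, isaut g /\ (forall x, g (f x) = x) /\ (forall x, f (g x) = x).
Proof.
  intros [[g [H1 H2]] Ha]. exists g. split; [|auto].
  split; [exists f; auto|]. intros x y. rewrite (Ha (g x) (g y)), !H2. tauto.
Qed.

Lemma aut_comp f g : isaut f -> isaut g -> isaut (fun x => f (g x)).
Proof.
  intros [[f' [F1 F2]] Fa] [[g' [G1 G2]] Ga]. split.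
  - exists (fun x => g' (f' x)). split; intros x; [rewrite F1, G1|rewrite G2, F2]; auto.
  - intros x y. rewrite Ga, Fa. tauto.
Qed.

Lemma aut_id : isaut (fun x => x).
Proof. split; [exists (fun x => x); auto|tauto]. Qed.

Lemma aut_deg f v : isaut f -> dk (snd (f v)) = dk (snd v).
Proof.
  intros Hf. pose proof (degree_nbrs v) as [l [Hn [Hi Hl]]].
  destruct (aut_inv f Hf) as [g [_ [G1 G2]]].
  destruct Hf as [_ Ha].
  symmetry. rewrite <- Hl. rewrite <- (length_map f l). apply degree_uniq.
  exists (map f l). split; [|split; auto].
  - apply FinFun.Injective_map_NoDup; auto. intros a b E. rewrite <- (G1 a), <- (G1 b), E; auto.
  - intros w. rewrite <- (G2 w) at 1. rewrite <- Ha, Hi. split.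
    + intros H. rewrite <- (G2 w). apply in_map; auto.
    + intros H. apply in_map_iff in H. destruct H as [x [<- Hx]]. rewrite G1; auto.
Qed.

Lemma aut_adj f v w : isaut f -> adjG v w -> In (f w) (nbrs (f v)).
Proof. intros [_ Ha] H. apply adj_nbrs. apply (proj1 (Ha v w)). exact H. Qed.

Definition isT v := dk (snd v) = 3 /\ exists w, adjG v w /\ dk (snd w) = 2.
Lemma isT_iff v : isT v <-> snd v = KT.
Proof.
  split.
  - intros [H1 [w [H2 H3]]]. apply adj_nbrs in H2.
    destruct v as [t K]; destruct K; simpl in H1, H2 |- *; try discriminate; auto;
    repeat match goal with H : _ \/ _ |- _ => destruct H | H : False |- _ => destruct H end;
    subst; simpl in H3; discriminate.
  - destruct v as [t K]; simpl; intros ->. split; [reflexivity|]. exists (t,KM); simpl; auto.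
Qed.
Lemma aut_T f v : isaut f -> snd v = KT -> snd (f v) = KT.
Proof.
  intros Hf HT. apply isT_iff in HT. apply isT_iff. destruct HT as [H1 [w [H2 H3]]].
  split; [rewrite aut_deg; auto|]. exists (f w). split; [apply (proj1 (proj2 Hf v w)); auto|rewrite aut_deg; auto].
Qed.
Lemma aut_T' f v : isaut f -> snd (f v) = KT -> snd v = KT.
Proof.
  intros Hf HT. destruct (aut_inv f Hf) as [g [Hg [G1 G2]]].
  rewrite <- (G1 v). apply aut_T; auto.
Qed.

Ltac nbr_case f u v H :=
  let Hn := fresh in let Hd := fresh in
  pose proof (aut_adj f u v H ltac:(simpl; auto)) as Hn;
  pose proof (aut_deg f v H) as Hd;
  match goal with E : f u = _ |- _ => rewrite E in Hn end;
  simpl in Hn;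
  repeat match goal with Hh : _ \/ _ |- _ => destruct Hh | Hh : False |- _ => destruct Hh end;
  try (match goal with Hh : _ = f v |- _ => rewrite <- Hh in Hd end; simpl in Hd; discriminate).

Lemma aut_XT f t t' : isaut f -> f (t,KX) = (t',KX) -> f (t,KT) = (t',KT).
Proof.
  intros Hf E.
  assert (EW : f (t,KW) = (t',KW)).
  { nbr_case f (t,KX) (t,KW) Hf; auto. }
  assert (EM : f (t,KM) = (t',KM)).
  { nbr_case f (t,KW) (t,KM) Hf; auto. }
  nbr_case f (t,KM) (t,KT) Hf; auto.
Qed.

Lemma aut_par f t t' : isaut f -> f (t,KT) = (t',KT) -> f (par t, KT) = (par t', KT).
Proof.
  intros Hf E.
  assert (EM : f (t,KM) = (t',KM)).
  { nbr_case f (t,KT) (t,KM) Hf; auto. }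
  assert (EW : f (t,KW) = (t',KW)).
  { nbr_case f (t,KM) (t,KW) Hf; auto. }
  assert (EX : f (t,KX) = (t',KX)).
  { nbr_case f (t,KW) (t,KX) Hf; auto. }
  pose proof (aut_adj f (t,KX) (par t,KT) Hf ltac:(simpl; auto)) as Hn.
  pose proof (aut_T f (par t,KT) Hf eq_refl) as HT.
  rewrite EX in Hn. simpl in Hn.
  repeat match goal with Hh : _ \/ _ |- _ => destruct Hh | Hh : False |- _ => destruct Hh end;
  try (rewrite <- H in HT; discriminate); auto.
Qed.

Definition proper3 (c : VV -> nat) := proper_coloring VV adjG 3 c.

Lemma forced c t : proper3 c -> c (t,KX) <> c (sib t, KX).
Proof.
  intros [Hc Hp].
  pose proof (Hp (t,KX) (t,KZ) eq_refl). pose proof (Hp (t,KX) (t,KW) eq_refl).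
  pose proof (Hp (t,KZ) (t,KW) eq_refl). pose proof (Hp (t,KY) (t,KZ) eq_refl).
  pose proof (Hp (t,KY) (t,KW) eq_refl). pose proof (Hp (t,KY) (sib t,KX) eq_refl).
  pose proof (Hc (t,KX)). pose proof (Hc (t,KY)). pose proof (Hc (t,KZ)). pose proof (Hc (t,KW)).
  lia.
Qed.

Lemma fix_child f c y b : isaut f -> proper3 c -> (forall x, c (f x) = c x) ->
  f (y,KT) = (y,KT) -> f (ch b y, KT) = (ch b y, KT).
Proof.
  intros Hf Hc Hcol E. apply aut_XT; auto.
  pose proof (aut_adj f (y,KT) (ch b y,KX) Hf ltac:(simpl; apply par_ch)) as Hn.
  pose proof (aut_deg f (ch b y, KX) Hf) as Hd.
  rewrite E in Hn. simpl in Hn.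
  repeat match goal with Hh : _ \/ _ |- _ => destruct Hh | Hh : False |- _ => destruct Hh end.
  - rewrite <- H in Hd; discriminate.
  - destruct b; auto. exfalso. apply (forced c (ch true y) Hc).
    rewrite sib_ch. simpl. rewrite <- Hcol, <- H. reflexivity.
  - destruct b; auto. exfalso. apply (forced c (ch false y) Hc).
    rewrite sib_ch. simpl. rewrite <- Hcol, <- H. reflexivity.
Qed.

From Stdlib Require Import Classical ClassicalEpsilon.

Lemma reduce {A} (R : A -> A -> Prop) (Rrefl : forall a, R a a)
  (Rsym : forall a b, R a b -> R b a) (Rtr : forall a b c, R a b -> R b c -> R a c) (L : list A) :
  exists L', NoDup L' /\ (forall a, In a L -> exists b, In b L' /\ R a b) /\
             (forall a b, In a L' -> In b L' -> R a b -> a = b).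
Proof.
  induction L as [|x L IH].
  - exists []. split; [constructor|]. split; simpl; tauto.
  - destruct IH as [L' [Hn [Hc Hu]]].
    destruct (classic (exists b, In b L' /\ R x b)) as [Hx|Hx].
    + exists L'. split; auto. split; auto. intros a [<-|Ha]; auto.
    + exists (x :: L'). split; [constructor; auto|].
      { intros Hin. apply Hx. exists x; auto. }
      split.
      * intros a [<-|Ha]; [exists x; simpl; auto|]. destruct (Hc a Ha) as [b [Hb Rb]]. exists b; simpl; auto.
      * intros a b [<-|Ha] [<-|Hb] R1; auto.
        all: exfalso; apply Hx; eauto.
Qed.

Theorem no_periodic3 : ~ (exists c, proper_coloring VV adjG 3 c /\ periodic_coloring VV adjG c).
Proof.
  intros [c [Hc [reps Hreps]]].
  set (HH := fun f => isaut f /\ forall x, c (f x) = c x).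
  set (eqv := fun t t' => exists f, HH f /\ f (t,KT) = (t',KT)).
  assert (Erefl : forall t, eqv t t).
  { intros t. exists (fun x => x). split; [split; [apply aut_id|auto]|auto]. }
  assert (Esym : forall t t', eqv t t' -> eqv t' t).
  { intros t t' [f [[Hf Hfc] E]]. destruct (aut_inv f Hf) as [g [Hg [G1 G2]]].
    exists g. split; [split; auto|].
    - intros x. rewrite <- (Hfc (g x)), G2. auto.
    - rewrite <- E, G1. auto. }
  assert (Etr : forall a b d, eqv a b -> eqv b d -> eqv a d).
  { intros a b d [f [[Hf Hfc] E]] [g [[Hg Hgc] E']].
    exists (fun x => g (f x)). split; [split; [apply aut_comp; auto|]|].
    - intros x. rewrite Hgc, Hfc. auto.
    - rewrite E, E'. auto. }
  assert (Epar : forall t t', eqv t t' -> eqv (par t) (par t')).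
  { intros t t' [f [[Hf Hfc] E]]. exists f. split; [split; auto|]. apply aut_par; auto. }
  assert (Ech : forall y b b', eqv (ch b y) (ch b' y) -> b = b').
  { intros y b b' [f [[Hf Hfc] E]].
    assert (E1 : f (y,KT) = (y,KT)).
    { pose proof (aut_par f _ _ Hf E) as E2. rewrite !par_ch in E2. auto. }
    pose proof (fix_child f c y b Hf Hc Hfc E1) as E3. rewrite E in E3.
    assert (E4 : ch b' y = ch b y) by exact (f_equal fst E3).
    apply ch_inj in E4. destruct E4; auto. }
  set (L := map fst (filter (fun v => match snd v with KT => true | _ => false end) reps)).
  assert (Hcov : forall t, exists a, In a L /\ eqv a t).
  { intros t. destruct (Hreps (t,KT)) as [s [f [Hs [[Hf Hfc] E]]]].
    pose proof (aut_T' f s Hf ltac:(rewrite E; reflexivity)) as Hs'.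
    destruct s as [a K]. simpl in Hs'. subst K. exists a. split.
    - unfold L. apply in_map_iff. exists (a,KT). split; auto. apply filter_In. auto.
    - exists f. split; [split|]; auto. }
  destruct (reduce eqv Erefl Esym Etr L) as [L' [Hn [Hc' Hu]]].
  assert (Hcov' : forall t, exists b, In b L' /\ eqv t b).
  { intros t. destruct (Hcov t) as [a [Ha Ea]]. destruct (Hc' a Ha) as [b [Hb Eb]].
    exists b. split; auto. apply Etr with a; auto. }
  set (z := fun (p : TV * bool) => proj1_sig (constructive_indefinite_description _ (Hcov' (ch (snd p) (fst p))))).
  assert (Hz : forall p, In (z p) L' /\ eqv (ch (snd p) (fst p)) (z p)).
  { intros p. unfold z. destruct (constructive_indefinite_description _ _) as [w Hw]. simpl. auto. }
  set (src := map (fun y => (y,false)) L' ++ map (fun y => (y,true)) L').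
  assert (Hsrc : NoDup src).
  { apply NoDup_app.
    - apply FinFun.Injective_map_NoDup; auto. intros a b E; injection E; auto.
    - apply FinFun.Injective_map_NoDup; auto. intros a b E; injection E; auto.
    - intros [a b] H1 H2. apply in_map_iff in H1, H2.
      destruct H1 as [? [E1 _]], H2 as [? [E2 _]]. rewrite <- E1 in E2. discriminate. }
  assert (Hsrc_in : forall p, In p src -> In (fst p) L').
  { intros p Hp. apply in_app_or in Hp. destruct Hp as [Hp|Hp]; apply in_map_iff in Hp;
    destruct Hp as [y [<- Hy]]; auto. }
  assert (Hl : NoDup (map z src)).
  { apply NoDup_map_NoDup_ForallPairs; auto.
    intros [y i] [y' i'] Hp Hp' E.
    apply Hsrc_in in Hp, Hp'. simpl in Hp, Hp'.
    destruct (Hz (y,i)) as [_ E1]. destruct (Hz (y',i')) as [_ E2]. simpl in E1, E2.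
    rewrite E in E1. assert (E3 : eqv (ch i y) (ch i' y')) by eauto.
    pose proof (Epar _ _ E3) as E4. rewrite !par_ch in E4.
    assert (y = y') by (apply Hu; auto). subst y'.
    f_equal. apply (Ech y); auto. }
  assert (Hincl : incl (map z src) L').
  { intros w Hw. apply in_map_iff in Hw. destruct Hw as [p [<- _]]. apply Hz. }
  pose proof (NoDup_incl_length Hl Hincl) as Hle.
  rewrite length_map in Hle. unfold src in Hle. rewrite length_app, !length_map in Hle.
  destruct (Hcov' o) as [b [Hb _]].
  destruct L'; [destruct Hb|]. simpl in Hle. lia.
Qed.


Definition lift (phi : TV -> TV) (v : VV) : VV := (phi (fst v), snd v).

Lemma lift_aut phi psi : (forall x, psi (phi x) = x) -> (forall x, phi (psi x) = x) ->
  (forall x, phi (par x) = par (phi x)) -> (forall x, phi (sib x) = sib (phi x)) ->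
  isaut (lift phi).
Proof.
  intros H1 H2 Hp Hs. split.
  - exists (lift psi). unfold lift; split; intros [a K]; simpl; rewrite ?H1, ?H2; auto.
  - assert (inj : forall a b, phi a = phi b -> a = b).
    { intros a b E. rewrite <- (H1 a), <- (H1 b), E. auto. }
    intros [t K] [u L]; unfold lift; simpl. destruct K, L; simpl; split; intros E;
    subst; auto; try rewrite Hs; try rewrite Hp; auto;
    try (apply inj; rewrite ?Hs, ?Hp; auto).
Qed.

Lemma tau_aut t : isaut (lift (tau t)).
Proof. apply lift_aut with (taui t); intros; auto using taui_tau, tau_taui, tau_par, tau_sib. Qed.

Definition kinds := [KT; KX; KY; KZ; KW; KM].

Lemma qt : quasi_transitive VV adjG.
Proof.
  exists (map (fun K => (o,K)) kinds). intros [t K].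
  exists (o,K), (lift (tau t)). split; [destruct K; simpl; tauto|]. split.
  - apply tau_aut.
  - unfold lift; simpl. rewrite tau_o. auto.
Qed.

Definition col4 (v : VV) : nat :=
  match snd v with KX => 0 | KY => 1 | KZ => 2 | KW => 3 | KT => 1 | KM => 0 end.

Lemma col4_ok : proper_coloring VV adjG 4 col4 /\ periodic_coloring VV adjG col4.
Proof.
  split; [split|].
  - intros [t K]; unfold col4; destruct K; simpl; lia.
  - intros [t K] [u L]; unfold col4; destruct K, L; simpl; intros; try discriminate; tauto.
  - exists (map (fun K => (o,K)) kinds). intros [t K].
    exists (o,K), (lift (tau t)). split; [destruct K; simpl; tauto|]. split; [split|].
    + apply tau_aut.
    + intros [x L]; reflexivity.
    + unfold lift; simpl. rewrite tau_o. auto.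
Qed.

Definition bn (b : bool) : nat := if b then 1 else 0.
Definition col3 (v : VV) : nat :=
  let b := bn (lastd (fst v)) in
  match snd v with KT => 0 | KX => 1 + b | KY => 1 + b | KZ => 0 | KW => 2 - b | KM => 1 + b end.

Lemma col3_ok : proper_coloring VV adjG 3 col3.
Proof.
  split.
  - intros [t K]; unfold col3; destruct K; simpl; destruct (lastd t); simpl; lia.
  - intros [t K] [u L]; unfold col3; destruct K, L; simpl; intros E; try contradiction; subst;
    try rewrite lastd_sib; try (destruct (lastd _); simpl; lia); try (destruct (lastd t); simpl; lia).
Qed.

Lemma chi3 : chromatic_number VV adjG 3.
Proof.
  split; [exists col3; apply col3_ok|].
  intros j Hj [c [Hc Hp]].
  pose proof (Hp (o,KX) (o,KZ) eq_refl). pose proof (Hp (o,KX) (o,KW) eq_refl).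
  pose proof (Hp (o,KZ) (o,KW) eq_refl).
  pose proof (Hc (o,KX)). pose proof (Hc (o,KZ)). pose proof (Hc (o,KW)). lia.
Qed.

Lemma lf : locally_finite VV adjG.
Proof. intros v. eexists. apply degree_nbrs. Qed.

Lemma md : max_degree VV adjG 4.
Proof.
  split.
  - intros v. exists (dk (snd v)). split; [apply degree_nbrs|]. destruct v as [t K]; destruct K; simpl; lia.
  - exists (o,KX). apply (degree_nbrs (o,KX)).
Qed.

From Stdlib Require Import Relations.

Lemma last_cons_d {A} (y x : A) l : last (y :: l) x = last l y.
Proof. revert y x; induction l as [|a l IH]; intros y x; [reflexivity|].
  change (last (a :: l) x = last (a :: l) y). rewrite !IH. reflexivity. Qed.

Lemma walk_app {A} (adj : A -> A -> Prop) x l1 l2 :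
  walk_from A adj x (l1 ++ l2) -> walk_from A adj (last l1 x) l2.
Proof. revert x; induction l1 as [|a l1 IH]; intros x H; [exact H|].
  simpl in H. destruct H as [_ H]. rewrite last_cons_d. auto. Qed.

Lemma last_app_cons {A} (x u : A) l1 l2 : last (l1 ++ u :: l2) x = last l2 u.
Proof. revert x; induction l1 as [|a l1 IH]; intros x.
  - apply last_cons_d.
  - change ((a :: l1) ++ u :: l2) with (a :: (l1 ++ u :: l2)). rewrite last_cons_d. auto. Qed.

Lemma shorten {A} (adj : A -> A -> Prop) : forall l u, walk_from A adj u l ->
  exists l', is_path A adj u l' /\ last l' u = last l u.
Proof.
  induction l as [|y l IH]; intros u Hw.
  - exists []. split; [split; [simpl; auto|repeat constructor; simpl; tauto]|auto].
  - destruct Hw as [Huy Hw]. destruct (IH y Hw) as [l1 [[Hw1 Hn1] Hl1]].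
    assert (Hwu : walk_from A adj u (y :: l1)) by (simpl; auto).
    destruct (classic (In u (y :: l1))) as [Hin|Hin].
    + apply in_split in Hin. destruct Hin as [A1 [B1 E]].
      exists B1. rewrite E in Hwu, Hn1. split; [split|].
      * replace (A1 ++ u :: B1) with ((A1 ++ [u]) ++ B1) in Hwu by (rewrite <- app_assoc; auto).
        apply walk_app in Hwu. rewrite last_last in Hwu. auto.
      * apply NoDup_app_remove_l in Hn1. auto.
      * rewrite last_cons_d, <- Hl1, <- (last_cons_d y u l1), E, last_app_cons. auto.
    + exists (y :: l1). split; [split|].
      * simpl. auto.
      * constructor; auto.
      * rewrite !last_cons_d. auto.
Qed.

Lemma rt_walk {A} (adj : A -> A -> Prop) u v : clos_refl_trans A adj u v ->
  exists l, walk_from A adj u l /\ last l u = v.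
Proof.
  intros H. apply clos_rt_rt1n_iff in H. induction H as [x|x y z Hxy Hyz [l [Hw Hl]]].
  - exists []. simpl; auto.
  - exists (y :: l). split; [simpl; auto|]. rewrite last_cons_d. auto.
Qed.

Definition RR := clos_refl_trans VV adjG.

Lemma RR_sym a b : RR a b -> RR b a.
Proof.
  intros H; induction H.
  - apply rt_step. apply (proj1 simple). auto.
  - apply rt_refl.
  - eapply rt_trans; eauto.
Qed.

Lemma RR_T t K : RR (t,K) (t,KT).
Proof.
  assert (HM : RR (t,KM) (t,KT)) by (apply rt_step; simpl; auto).
  assert (HW : RR (t,KW) (t,KT)) by (apply rt_trans with (t,KM); [apply rt_step; simpl; reflexivity|exact HM]).
  destruct K; try apply rt_refl; auto;
  (apply rt_trans with (t,KW); [apply rt_step; simpl; reflexivity|exact HW]).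
Qed.

Lemma RR_par t : RR (t,KT) (par t, KT).
Proof.
  eapply rt_trans; [apply RR_sym, (RR_T t KX)|]. apply rt_step. simpl. reflexivity.
Qed.

Lemma iter_par a t : lvl (Nat.iter a par t) = (lvl t - Z.of_nat a)%Z /\
  forall k, dg (Nat.iter a par t) k = ((k <? lvl t - Z.of_nat a)%Z && dg t k).
Proof.
  induction a as [|a [IH1 IH2]].
  - simpl. split; [lia|]. intros k. destruct (Z.ltb_spec k (lvl t - 0)); simpl; auto.
    rewrite dg_hi; auto. lia.
  - change (Nat.iter (S a) par t) with (par (Nat.iter a par t)). rewrite Nat2Z.inj_succ. split.
    + rewrite lvl_par, IH1. lia.
    + intros k. unfold par at 1. cbn [dg lvl mkT proj1_sig fst snd]. unfold mask.
      fold (lvl (Nat.iter a par t)). fold (dg (Nat.iter a par t)). rewrite IH1, IH2.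
      destruct (Z.ltb_spec k (lvl t - Z.of_nat a - 1)), (Z.ltb_spec k (lvl t - Z.of_nat a)),
        (Z.ltb_spec k (lvl t - Z.succ (Z.of_nat a))); simpl; auto; lia.
Qed.

Lemma RR_iter a t : RR (t,KT) (Nat.iter a par t, KT).
Proof. induction a; simpl; [apply rt_refl|]. eapply rt_trans; [exact IHa|apply RR_par]. Qed.

Lemma to_zero t : exists M, forall L, (L <= M)%Z -> RR (t,KT) (zeroT L, KT).
Proof.
  destruct (dg_lo t) as [m Hm]. exists (Z.min m (lvl t)). intros L HL.
  replace (zeroT L) with (Nat.iter (Z.to_nat (lvl t - L)) par t).
  - apply RR_iter.
  - destruct (iter_par (Z.to_nat (lvl t - L)) t) as [H1 H2].
    apply TV_ext.
    + rewrite H1. unfold zeroT. rewrite lvl_mk. lia.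
    + intros k. rewrite H2. unfold zeroT. rewrite dg_mk.
      destruct (Z.ltb_spec k (lvl t - Z.of_nat (Z.to_nat (lvl t - L)))), (Z.ltb_spec k L); simpl; auto;
      try lia. apply Hm. lia.
Qed.

Lemma conn : connected VV adjG.
Proof.
  intros u v.
  assert (H : RR u v).
  { destruct u as [t K], v as [t' K'].
    destruct (to_zero t) as [M HM], (to_zero t') as [M' HM'].
    eapply rt_trans; [apply RR_T|]. eapply rt_trans; [apply (HM (Z.min M M')); lia|].
    eapply rt_trans; [apply RR_sym, (HM' (Z.min M M')); lia|]. apply RR_sym, RR_T. }
  destruct (rt_walk _ _ _ H) as [l [Hw Hl]].
  destruct (shorten adjG l u Hw) as [l' [Hp Hl']]. exists l'. split; auto. congruence.
Qed.


Definition desc c t := (lvl c < lvl t)%Z /\ forall k, (k < lvl c)%Z -> dg t k = dg c k.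
Definition region c (v : VV) := desc c (fst v).

Lemma desc_ch c t b : desc c t -> desc c (ch b t).
Proof.
  intros [H1 H2]. split; [rewrite lvl_ch; lia|]. intros k Hk.
  unfold ch. cbn [dg lvl mkT proj1_sig fst snd]. unfold mask. fold (lvl t). fold (dg t).
  destruct (Z.ltb_spec k (lvl t + 1)), (Z.eqb_spec k (lvl t)); simpl; try lia. auto.
Qed.

Lemma region_closed c a b : region c a -> adjG a b -> region c b \/ b = (c,KT).
Proof.
  destruct a as [t K], b as [u L]; unfold region; simpl. intros Hd Hab.
  destruct K, L; simpl in Hab; try contradiction; subst; auto.
  - left. rewrite (par_inv u _ eq_refl). apply desc_ch; auto.
  - destruct Hd as [H1 H2].
    destruct (Z.eq_dec (lvl t) (lvl c + 1)) as [E|E].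
    + right. f_equal. apply TV_ext; [rewrite lvl_par; lia|]. intros k.
      unfold par. cbn [dg lvl mkT proj1_sig fst snd]. unfold mask. fold (lvl t). fold (dg t).
      destruct (Z.ltb_spec k (lvl t - 1)); simpl.
      * apply H2. lia.
      * rewrite dg_hi; auto. lia.
    + left. split; [rewrite lvl_par; lia|]. intros k Hk.
      unfold par. cbn [dg lvl mkT proj1_sig fst snd]. unfold mask. fold (lvl t). fold (dg t).
      destruct (Z.ltb_spec k (lvl t - 1)); simpl; try lia. auto.
  - left. destruct Hd as [H1 H2]. split; [exact H1|].
    intros k Hk. unfold sib. cbn [dg lvl mkT proj1_sig fst snd]. unfold mask. fold (lvl t). fold (dg t).
    destruct (Z.ltb_spec k (lvl t)), (Z.eqb_spec k (lvl t - 1)); simpl; try lia. auto.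
  - left. destruct Hd as [H1 H2]. split; [exact H1|].
    intros k Hk. unfold sib. cbn [dg lvl mkT proj1_sig fst snd]. unfold mask. fold (lvl t). fold (dg t).
    destruct (Z.ltb_spec k (lvl t)), (Z.eqb_spec k (lvl t - 1)); simpl; try lia. auto.
Qed.

Lemma separate c : forall l u, walk_from VV adjG u l -> region c u -> ~ region c (last l u) ->
  In (c,KT) (u :: l).
Proof.
  induction l as [|y l IH]; intros u Hw Hu Hl.
  - simpl in Hl. contradiction.
  - destruct Hw as [Huy Hw]. rewrite last_cons_d in Hl.
    destruct (region_closed c u y Hu Huy) as [Hy|Hy].
    + right. apply IH; auto.
    + subst. simpl; auto.
Qed.


Definition step (v : VV) : VV :=
  let (t,K) := v in
  match K with
  | KT => (ch false t, KX) | KX => (t,KW) | KW => (t,KM) | KM => (t,KT) | _ => v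
  end.
Definition goodK (K : Kd) : Prop := match K with KY | KZ => False | _ => True end.
Definition off (K : Kd) : Z := match K with KT => 0 | KX => -3 | KW => -2 | KM => -1 | _ => 0 end.
Definition mu (v : VV) : Z := (4 * lvl (fst v) + off (snd v))%Z.

Lemma step_good v : goodK (snd v) -> goodK (snd (step v)) /\ adjG v (step v) /\ mu (step v) = (mu v + 1)%Z.
Proof.
  destruct v as [t K]; destruct K; cbn [snd goodK step]; intros H; try contradiction;
  (split; [exact I|split; [simpl; try apply par_ch; reflexivity|]]); unfold mu, off; cbn [fst snd];
  try rewrite lvl_ch; lia.
Qed.

Definition ray t n := Nat.iter n step (t,KT).

Lemma ray_good t n : goodK (snd (ray t n)) /\ mu (ray t n) = (4 * lvl t + Z.of_nat n)%Z.
Proof.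
  induction n as [|n [IH1 IH2]].
  - split; [exact I|]. change (mu (ray t 0)) with (4 * lvl t + 0)%Z. lia.
  - change (ray t (S n)) with (step (ray t n)). destruct (step_good _ IH1) as [A [B C]].
    split; auto. rewrite C, IH2. lia.
Qed.

Lemma ray_is_ray t : is_ray VV adjG (ray t).
Proof.
  split.
  - intros n. change (ray t (S n)) with (step (ray t n)). apply step_good, ray_good.
  - intros m n E. assert (mu (ray t m) = mu (ray t n)) by (rewrite E; auto).
    rewrite !(proj2 (ray_good t _)) in H. lia.
Qed.

Lemma ray_region c t : desc c t -> forall n, region c (ray t n).
Proof.
  intros Hd n. induction n as [|n IH]; [exact Hd|].
  change (ray t (S n)) with (step (ray t n)). unfold region in *.
  destruct (ray t n) as [u K]; destruct K; simpl in *; auto. apply desc_ch; auto.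
Qed.

Definition sp (i : nat) := Nat.iter i (ch false) o.
Lemma sp_prop i : lvl (sp i) = Z.of_nat i /\ forall k, dg (sp i) k = false.
Proof.
  induction i as [|i [IH1 IH2]].
  - split; [reflexivity|]. intros k. unfold sp; simpl. unfold o, zeroT. cbn [dg mkT proj1_sig snd]. unfold mask. apply andb_false_r.
  - change (sp (S i)) with (ch false (sp i)). split.
    + rewrite lvl_ch, IH1. lia.
    + intros k. unfold ch. cbn [dg lvl mkT proj1_sig fst snd]. unfold mask. fold (lvl (sp i)). fold (dg (sp i)).
      rewrite IH2. destruct (k <? _)%Z, (k =? _)%Z; reflexivity.
Qed.
Definition cc (i : nat) := ch true (sp i).
Lemma cc_prop i : lvl (cc i) = (Z.of_nat i + 1)%Z /\
  forall k, (k < Z.of_nat i + 1)%Z -> dg (cc i) k = (k =? Z.of_nat i)%Z.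
Proof.
  destruct (sp_prop i) as [H1 H2]. split.
  - unfold cc. rewrite lvl_ch, H1. auto.
  - intros k Hk. unfold cc, ch. cbn [dg lvl mkT proj1_sig fst snd]. unfold mask. fold (lvl (sp i)). fold (dg (sp i)).
    rewrite H1, H2. destruct (Z.ltb_spec k (Z.of_nat i + 1)); [|lia].
    destruct (k =? Z.of_nat i)%Z; reflexivity.
Qed.

Lemma cc_sep i j t : i <> j -> desc (cc i) t -> desc (cc j) t -> False.
Proof.
  intros Hij [A1 A2] [B1 B2].
  destruct (cc_prop i) as [Ci1 Ci2], (cc_prop j) as [Cj1 Cj2].
  set (k := Z.of_nat (Nat.min i j)).
  assert (Hki : (k < lvl (cc i))%Z) by (unfold k; lia).
  assert (Hkj : (k < lvl (cc j))%Z) by (unfold k; lia).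
  pose proof (A2 k Hki) as E1. pose proof (B2 k Hkj) as E2.
  rewrite Ci2 in E1 by lia. rewrite Cj2 in E2 by lia. rewrite E1 in E2.
  unfold k in E2. destruct (Nat.min_spec i j) as [[Hm Hm']|[Hm Hm']]; rewrite Hm' in E2;
  destruct (Z.eqb_spec (Z.of_nat i) (Z.of_nat i)), (Z.eqb_spec (Z.of_nat i) (Z.of_nat j)),
    (Z.eqb_spec (Z.of_nat j) (Z.of_nat j)), (Z.eqb_spec (Z.of_nat j) (Z.of_nat i)); try discriminate; lia.
Qed.

Lemma desc_self c b : desc c (ch b c).
Proof.
  split; [rewrite lvl_ch; lia|]. intros k Hk.
  unfold ch. cbn [dg lvl mkT proj1_sig fst snd]. unfold mask. fold (lvl c). fold (dg c).
  destruct (Z.ltb_spec k (lvl c + 1)), (Z.eqb_spec k (lvl c)); simpl; try lia. auto.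
Qed.

Definition RAY (i : nat) := ray (ch false (cc i)).

Lemma ends : infinitely_many_ends VV adjG.
Proof.
  intros n. exists RAY. split.
  - intros i _. apply ray_is_ray.
  - intros i j _ _ Hij [P [HP [Hs [He Hd]]]].
    assert (Hin : forall q, In (cc i, KT) (path_verts VV (P q))).
    { intros q. destruct (Hs q) as [m Hm]. destruct (He q) as [m' Hm'].
      destruct (HP q) as [Hw _]. unfold path_verts.
      apply separate; auto.
      - rewrite Hm. apply ray_region. apply desc_self.
      - rewrite Hm'. intros Hr. apply (cc_sep i j (fst (RAY j m'))); auto.
        apply ray_region. apply desc_self. }
    apply (Hd 0 1 (cc i, KT)); auto.
Qed.


Theorem mainTheorem19 :
  exists (V : Type) (adj : V -> V -> Prop),
    simple_graph V adj /\ connected V adj /\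
    locally_finite V adj /\ quasi_transitive V adj /\
    infinitely_many_ends V adj /\
    chromatic_number V adj 3 /\
    max_degree V adj 4 /\
    (exists c, proper_coloring V adj 4 c /\ periodic_coloring V adj c) /\
    ~ (exists c, proper_coloring V adj 3 c /\ periodic_coloring V adj c).
Proof.
  exists VV, adjG.
  split; [apply simple|]. split; [apply conn|]. split; [apply lf|]. split; [apply qt|].
  split; [apply ends|]. split; [apply chi3|]. split; [apply md|].
  split; [exists col4; apply col4_ok|]. apply no_periodic3.
Qed.
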